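(* Let $V$ be a simple unitary vertex operator algebra and let $a \in V_d$. Then for all $b \in V$ and all integers $m \geq 0$, $$\|a_m b\|^2 \leq \big(b \,\big|\, (a_{-d}a^* )_0\, b\big).$$ Consequently $\|a_m\|_n^2 \leq \|(a_{-d}a^* )_0\|_n$ for all $m \in \mathbb{Z}_{\geq 0}$ and all $n \in \mathbb{Z}$; in particular $\|a_0\|_n^2 \leq \|(a_{-d}a^* )_0\|_n$ for all $n\in\mathbb{Z}$.
   Context: A simple unitary vertex operator algebra is a vertex operator algebra $V$ (over $\mathbb{C}$) of CFT type, i.e. $V=\bigoplus_{n\geq 0}V_n$ with $V_n=\ker(L_0-n1_V)$ and $V_0=\mathbb{C}\Omega$, with vacuum $\Omega$ and conformal vector $\nu$, $Y(\nu,z)=\sum_{n}L_nz^{-n-2}$, equipped with a scalar product $(\cdot|\cdot)$ with $(\Omega|\Omega)=1$ and an antilinear involution $a\mapsto a^*$ with $\nu^*=\nu$ such that $(b|a_nc)=(a^*_{-n}b|c)$ for all $a,b,c\in V$, $n\in\mathbb{Z}$. For $a\in V$ the modes $a_n\in\mathrm{End}(V)$ are defined by $Y(z^{L_0}a,z)=\sum_{n\in\mathbb{Z}}a_nz^{-n}$; for $a\in V_d$ this means $a_n=a_{(n+d-1)}$ where $Y(a,z)=\sum_n a_{(n)}z^{-n-1}$, and $a_{-d}b=a_{(-1)}b$. Write $\|a\|=\sqrt{(a|a)}$, $V_{\leq n}=\bigoplus_{k\leq n}V_k$, and for $R\in\mathrm{End}(V)$, $\|R\|_n:=\sup\{\|Rb\|: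 b\in V_{\leq n},\ \|b\|\leq 1\}\in[0,+\infty]$. *)

(* Defs.v *)
From HB Require Import structures.
From mathcomp Require Import all_boot all_order all_algebra.
From mathcomp Require Import complex.
From mathcomp Require Import all_classical all_reals ereal.

Set Implicit Arguments.
Unset Strict Implicit.
Unset Printing Implicit Defensive.

Import Order.TTheory GRing.Theory Num.Theory.
Local Open Scope ring_scope.

(* Generalized binomial coefficient binom(r, i) for r : int, i : nat:
   r (r-1) ... (r-i+1) / i!. *)
Definition zbin (r : int) (i : nat) : int :=
  match r with
  | Posz n => ('C(n, i))%:Z
  | Negz n => (-1) ^+ i * ('C(n + i, i))%:Z   (* Negz n = -(n+1) *)
  end.

(* Raw data of a (unitary) vertex operator algebra on a complex vector space V
   (complex numbers = R[i] for R : realType).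
   - Y a n b   is  a_(n) b  (Y(a,z) = sum_n a_(n) z^{-n-1});
   - vac is the vacuum Omega, conf the conformal vector nu, cc the central charge;
   - proj k is the projection onto V_k = ker(L_0 - k) w.r.t. V = (+)_{k>=0} V_k,
     dbound a is a bound on the degrees occurring in a;
   - ip is the scalar product (linear in the first variable), star the
     antilinear involution a |-> a^*. *)
Record VOAData (R : realType) (V : lmodType R[i]) := {
  Y : V -> int -> V -> V;
  vac : V;
  conf : V;
  cc : R[i];
  proj : nat -> V -> V;
  dbound : V -> nat;
  ip : V -> V -> R[i];
  star : V -> V
}.

Section Defs.
Variables (R : realType) (V : lmodType R[i]) (D : VOAData V).

Definition Lop (n : int) : V -> V := Y D (conf D) (n + 1).

Definition homog (k : nat) (a : V) : Prop := Lop 0 a = k%:R *: a.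

(* shifted modes  a_n  defined by Y(z^{L_0} a, z) = sum_n a_n z^{-n};
   for a in V_d, a_n = a_(n+d-1); extended linearly via the grading. *)
Definition smode (a : V) (n : int) (b : V) : V :=
  \sum_(k < dbound D a) Y D (proj D k a) (n + k%:Z - 1) b.

Definition vnorm (v : V) : R := Num.sqrt (complex.Re (ip D v v)).

Definition Vle (n : int) : set V :=
  [set b | forall k : nat, n < k%:Z -> proj D k b = 0].

Definition opnorm (T : V -> V) (n : int) : \bar R :=
  ereal_sup [set (vnorm (T b))%:E | b in [set b | Vle n b /\ vnorm b <= 1]].

Definition voa_ideal (I : V -> Prop) : Prop :=
  I 0 /\ (forall (c : R[i]) u v, I u -> I v -> I (c *: u + v)) /\
  (forall a v n, I v -> I (Y D a n v) /\ I (Y D v n a)).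

Definition is_simple_unitary_VOA : Prop :=
  (forall (c : R[i]) a a' n b, Y D (c *: a + a') n b = c *: Y D a n b + Y D a' n b) /\
  (forall (c : R[i]) a n b b', Y D a n (c *: b + b') = c *: Y D a n b + Y D a n b') /\
  (forall a b, exists N : int, forall n, N <= n -> Y D a n b = 0) /\
  (forall n b, Y D (vac D) n b = if n == -1 then b else 0) /\
  (forall a, Y D a (-1) (vac D) = a) /\
  (forall a n, 0 <= n -> Y D a n (vac D) = 0) /\
  (* Borcherds (Jacobi) identity; the sums are finite by truncation *)
  (forall a b c (p q r : int), exists K0 : nat, forall K : nat, (K0 <= K)%N ->
     \sum_(i < K) ((zbin p i)%:~R : R[i]) *: Y D (Y D a (r + i%:Z) b) (p + q - i%:Z) c =
     \sum_(i < K) (((-1) ^+ i * (zbin r i)%:~R) : R[i]) *: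
        (Y D a (p + r - i%:Z) (Y D b (q + i%:Z) c)
         - (((-1) ^ r) : R[i]) *: Y D b (q + r - i%:Z) (Y D a (p + i%:Z) c))) /\
  (forall (m n : int) v,
     Lop m (Lop n v) - Lop n (Lop m v) =
       (m - n)%:~R *: Lop (m + n) v
       + (if m + n == 0 then ((m ^+ 3 - m)%:~R / 12%:R * cc D) *: v else 0)) /\
  (forall a n b, Y D (Lop (-1) a) n b = - (n%:~R *: Y D a (n - 1) b)) /\
  (forall k (c : R[i]) u v, proj D k (c *: u + v) = c *: proj D k u + proj D k v) /\
  (forall k v, homog k (proj D k v)) /\
  (forall k v, homog k v -> proj D k v = v) /\
  (forall j k v, homog k v -> j <> k -> proj D j v = 0) /\
  (forall v k, (dbound D v <= k)%N -> proj D k v = 0) /\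
  (forall v, v = \sum_(k < dbound D v) proj D k v) /\
  (forall k : nat, exists s : seq V, forall v, homog k v ->
     exists c : 'I_(size s) -> R[i], v = \sum_(i < size s) c i *: nth 0 s i) /\
  (forall v, homog 0 v -> exists c : R[i], v = c *: vac D) /\
  homog 2 (conf D) /\
  (forall I, voa_ideal I -> (forall v, I v -> v = 0) \/ (forall v, I v)) /\
  (forall (c : R[i]) u u' v, ip D (c *: u + u') v = c * ip D u v + ip D u' v) /\
  (forall u v, ip D u v = conjc (ip D v u)) /\
  (forall v, 0 <= ip D v v) /\
  (forall v, ip D v v = 0 -> v = 0) /\
  ip D (vac D) (vac D) = 1 /\
  (forall (c : R[i]) u v, star D (c *: u + v) = conjc c *: star D u + star D v) /\
  (forall a, star D (star D a) = a) /\
  star D (conf D) = conf D /\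
  (forall a b c (n : int), ip D b (smode a n c) = ip D (smode (star D a) (- n) b) c).

End Defs.

(* Main.v *)
Require Import Defs.
From HB Require Import structures.
From mathcomp Require Import all_boot all_order all_algebra.
From mathcomp Require Import complex.
From mathcomp Require Import all_classical all_reals ereal.
From mathcomp Require Import zify ring lra.
Import Order.TTheory GRing.Theory Num.Theory.
Local Open Scope ring_scope.
Local Open Scope complex_scope.
Set Implicit Arguments.
Unset Strict Implicit.

Lemma lin_sum (R : realType) (V : lmodType R[i]) (f : V -> V)
  (Hf : forall (c : R[i]) u v, f (c *: u + v) = c *: f u + f v) :
  f 0 = 0 /\ (forall u v, f (u + v) = f u + f v) /\
  (forall (I : Type) (r : seq I) (P : pred I) (F : I -> V),
     f (\sum_(i <- r | P i) F i) = \sum_(i <- r | P i) f (F i)).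
Proof.
have f0 : f 0 = 0.
  have := Hf 1 0 0; rewrite !scale1r addr0 => H.
  by apply: (@addrI _ (f 0)); rewrite addr0 -H.
have fD : forall u v, f (u + v) = f u + f v by move=> u v; have := Hf 1 u v; rewrite !scale1r.
split; first exact: f0. split; first exact: fD. move=> I r P F.
by apply: (big_morph f fD f0).
Qed.

Ltac hv HV := have [Ylin1 [Ylin3 [_ [Yvac [Ya1vac [_ [Borch [_ [Lder [projlin [projh [projid [proj0 [projb [projsum [_ [cft [_ [_ [iplin [herm [ippos [ipdef [_ [starlin [starinv [_ inv]]]]]]]]]]]]]]]]]]]]]]]]]]] := HV.

Section S.
Variables (R : realType) (V : lmodType R[i]) (D : VOAData V).
Hypothesis HV : is_simple_unitary_VOA D.

Lemma YL n b : Y D 0 n b = 0 /\ (forall u v, Y D (u + v) n b = Y D u n b + Y D v n b) /\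
  (forall (I : Type) (r : seq I) (P : pred I) (F : I -> V),
     Y D (\sum_(i <- r | P i) F i) n b = \sum_(i <- r | P i) Y D (F i) n b).
Proof. hv HV; apply: (lin_sum (f := fun a => Y D a n b)) => c u v; exact: Ylin1. Qed.

Lemma YR a n : Y D a n 0 = 0 /\ (forall u v, Y D a n (u + v) = Y D a n u + Y D a n v) /\
  (forall (I : Type) (r : seq I) (P : pred I) (F : I -> V),
     Y D a n (\sum_(i <- r | P i) F i) = \sum_(i <- r | P i) Y D a n (F i)).
Proof. hv HV; apply: (lin_sum (f := Y D a n)) => c u v; exact: Ylin3. Qed.

Lemma PL k : Defs.proj D k 0 = 0 /\ (forall u v, Defs.proj D k (u + v) = Defs.proj D k u + Defs.proj D k v) /\
  (forall (I : Type) (r : seq I) (P : pred I) (F : I -> V),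
     Defs.proj D k (\sum_(i <- r | P i) F i) = \sum_(i <- r | P i) Defs.proj D k (F i)).
Proof. hv HV; apply: (lin_sum (f := Defs.proj D k)) => c u v; exact: projlin. Qed.


Lemma Y0l n b : Y D 0 n b = 0. Proof. by case: (YL n b). Qed.
Lemma YDl n b u v : Y D (u + v) n b = Y D u n b + Y D v n b. Proof. by case: (YL n b) => _ []. Qed.
Lemma Ysuml n b (I : Type) (r : seq I) (P : pred I) (F : I -> V) :
  Y D (\sum_(i <- r | P i) F i) n b = \sum_(i <- r | P i) Y D (F i) n b.
Proof. by case: (YL n b) => _ []. Qed.
Lemma Y0r a n : Y D a n 0 = 0. Proof. by case: (YR a n). Qed.
Lemma YDr a n u v : Y D a n (u + v) = Y D a n u + Y D a n v. Proof. by case: (YR a n) => _ []. Qed.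
Lemma Ysumr a n (I : Type) (r : seq I) (P : pred I) (F : I -> V) :
  Y D a n (\sum_(i <- r | P i) F i) = \sum_(i <- r | P i) Y D a n (F i).
Proof. by case: (YR a n) => _ []. Qed.
Lemma P0 k : Defs.proj D k 0 = 0. Proof. by case: (PL k). Qed.
Lemma Psum k (I : Type) (r : seq I) (P : pred I) (F : I -> V) :
  Defs.proj D k (\sum_(i <- r | P i) F i) = \sum_(i <- r | P i) Defs.proj D k (F i).
Proof. by case: (PL k) => _ []. Qed.

Lemma projh_eq j k v : homog D k v -> Defs.proj D j v = if j == k then v else 0.
Proof.
move=> hk; hv HV; have [->|ne] := eqVneq j k; [exact: projid | apply: proj0 hk _; exact/eqP].
Qed.

Lemma smode_homog d a n c : homog D d a -> smode D a n c = Y D a (n + d%:Z - 1) c.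
Proof.
move=> Ha.
rewrite /smode; case: (ltnP d (dbound D a)) => hd.
  rewrite (bigD1 (Ordinal hd)) //= (projh_eq _ Ha) eqxx big1 ?addr0 // => k.
  rewrite (projh_eq _ Ha) => /negbTE hk.
  have -> : (k == d :> nat) = false by apply/eqP => h; move/eqP: hk; apply; exact: val_inj.
  exact: Y0l.
have a0 : a = 0.
  hv HV; rewrite (projsum a) big1 // => k _; rewrite (projh_eq _ Ha).
  by case: eqP => // hk; move: (ltn_ord k); rewrite hk ltnNge hd.
rewrite a0 Y0l big1 // => k _; by rewrite P0 Y0l.
Qed.


Lemma homogY d j a c : homog D d a -> homog D j c -> homog D (d + j) (Y D a (-1) c).
Proof.
move=> Ha Hc; have HV' := HV; hv HV'.
have [K0 HK] := Borch (conf D) a c 1 (-1) 0.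
have := HK K0.+2 (leqW (leqnSn K0)).
rewrite !big_ord_recl.
rewrite big1; last by move=> i _; rewrite /= /bump !leq0n !add1n bin_small // scale0r.
rewrite big1; last by move=> i _; rewrite /= /bump !leq0n !add1n bin0n mulr0 scale0r.
rewrite /= /bump /=.
rewrite ?addr0 ?add0r ?subr0 ?bin0 ?binn ?expr0 ?mul1r ?expr0z ?scale1r.
rewrite addn0 bin0n /= mulr0 scale0r addr0.
have -> : Y D (Y D (conf D) 0 a) 0 c = Y D (Lop D (-1) a) 0 c by [].
have -> : Y D (Y D (conf D) (Posz (1 + 0)) a) (- Posz (1 + 0)) c = Y D (Lop D 0 a) (-1) c by [].
have -> : Y D (conf D) 1 (Y D a (-1) c) = Lop D 0 (Y D a (-1) c) by [].
have -> : Y D (conf D) 1 c = Lop D 0 c by [].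
rewrite Lder Ha Hc scale0r oppr0 add0r.
rewrite -[_ *: a]addr0 -[_ *: c]addr0 Ylin1 Ylin3 Y0l Y0r !addr0.
move=> E; by rewrite /homog natrD scalerDl E subrK.
Qed.

Lemma smodeX d a x b : homog D d a ->
  smode D (Y D a (-1) x) 0 b =
  \sum_(j < dbound D x) Y D (Y D a (-1) (Defs.proj D j x)) (d%:Z + j%:Z - 1) b.
Proof.
move=> Ha; have HV' := HV; hv HV'.
set X := Y D a (-1) x; set M := dbound D x.
have HX : X = \sum_(j < M) Y D a (-1) (Defs.proj D j x) by rewrite /X {1}(projsum x) Ysumr.
have pX : forall k, Defs.proj D k X =
    \sum_(j < M) (if k == (d + j)%N then Y D a (-1) (Defs.proj D j x) else 0).
  move=> k; rewrite HX Psum; apply: eq_bigr => j _; apply: projh_eq.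
  exact: homogY Ha (projh j x).
rewrite /smode.
rewrite (eq_bigr (fun k : 'I_(dbound D X) => \sum_(j < M) (if (k : nat) == (d + j)%N
    then Y D (Y D a (-1) (Defs.proj D j x)) (0 + k%:Z - 1) b else 0))); last first.
  move=> k _; rewrite pX Ysuml; apply: eq_bigr => j _; case: ifP => _ //; exact: Y0l.
rewrite exchange_big /=; apply: eq_bigr => j _.
case: (ltnP (d + j) (dbound D X)) => h.
  rewrite (bigD1 (Ordinal h)) //= eqxx big1 ?addr0; first by rewrite add0r PoszD.
  move=> k hk; case: eqP => // e; move/eqP: hk; case; exact: val_inj.
rewrite big1; last first.
  move=> k _; case: eqP => // e; move: (ltn_ord k); rewrite e ltnNge h //.
suff -> : Y D a (-1) (Defs.proj D j x) = 0 by rewrite Y0l.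
have := projb _ _ h; rewrite pX (bigD1 j) //= eqxx big1 ?addr0 //.
move=> j' hj'; case: eqP => // /eqP; rewrite eqn_add2l => /eqP e.
by move/eqP: hj'; case; apply: val_inj.
Qed.

Lemma coefN1 (i : nat) : ((-1) ^+ i * (zbin (-1) i)%:~R : R[i]) = 1.
Proof.
rewrite /zbin /= add0n binn mulr1 rmorphXn rmorphN1 -exprMn mulrNN mulr1 expr1n //.
Qed.

Lemma borchN1 a y q c : exists K0, forall K, (K0 <= K)%N ->
  Y D (Y D a (-1) y) q c = \sum_(i < K)
     (Y D a (-1 - i%:Z) (Y D y (q + i%:Z) c) + Y D y (q - 1 - i%:Z) (Y D a i%:Z c)).
Proof.
have HV' := HV; hv HV'.
have [K0 HK] := Borch a y c 0 q (-1).
exists K0.+1 => K hK; have := HK K (ltnW hK).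
case: K hK => // K _.
rewrite big_ord_recl big1; last first.
  by move=> i _; rewrite /= /bump leq0n add1n bin0n scale0r.
rewrite /= addr0 add0r subr0 addr0 scale1r => ->.
apply: eq_bigr => i _; rewrite coefN1 scale1r add0r.
by rewrite exprN1 invrN1 scaleN1r opprK add0r.
Qed.

Lemma ipDl u v w : ip D (u + v) w = ip D u w + ip D v w.
Proof. have HV' := HV; hv HV'; by have := iplin 1 u v w; rewrite scale1r mul1r. Qed.
Lemma ip0l w : ip D 0 w = 0.
Proof. have := ipDl 0 0 w; rewrite addr0 => H. by apply: (@addrI _ (ip D 0 w)); rewrite addr0 -H. Qed.
Lemma ipZl c u w : ip D (c *: u) w = c * ip D u w.
Proof. have HV' := HV; hv HV'; by have := iplin c u 0 w; rewrite addr0 ip0l addr0. Qed.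
Lemma ipDr u v w : ip D w (u + v) = ip D w u + ip D w v.
Proof. have HV' := HV; hv HV'; by rewrite herm ipDl rmorphD [ip D w u]herm [ip D w v]herm. Qed.
Lemma ip0r w : ip D w 0 = 0.
Proof. have HV' := HV; hv HV'; by rewrite herm ip0l conjc0. Qed.
Lemma ipZr c u w : ip D w (c *: u) = c^*%C * ip D w u.
Proof. have HV' := HV; hv HV'; by rewrite herm ipZl rmorphM [ip D w u]herm. Qed.
Lemma ipsumr w (I : Type) (r : seq I) (P : pred I) (F : I -> V) :
  ip D w (\sum_(i <- r | P i) F i) = \sum_(i <- r | P i) ip D w (F i).
Proof. have fD : forall u v, ip D w (u + v) = ip D w u + ip D w v by move=> u v; apply: ipDr.
by apply: (big_morph (ip D w) fD (ip0r w)). Qed.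
End S.

Lemma unif (P : nat -> nat -> Prop) n :
  (forall j, (j < n)%N -> exists K0, forall K, (K0 <= K)%N -> P j K) ->
  exists K0, forall K, (K0 <= K)%N -> forall j, (j < n)%N -> P j K.
Proof.
elim: n => [|n IH] H; first by exists 0%N.
have [K1 H1] := IH (fun j hj => H j (ltnW hj)).
have [K2 H2] := H n (ltnSn n).
exists (maxn K1 K2) => K hK j; rewrite ltnS leq_eqVlt => /orP [/eqP ->|hj].
  by apply: H2; apply: leq_trans hK; apply: leq_maxr.
by apply: H1 => //; apply: leq_trans hK; apply: leq_maxl.
Qed.

Section S2.
Variables (R : realType) (V : lmodType R[i]) (D : VOAData V).
Hypothesis HV : is_simple_unitary_VOA D.

Lemma expansion d a b : homog D d a -> exists K0, forall K, (K0 <= K)%N ->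
  ip D b (smode D (smode D a (- d%:Z) (star D a)) 0 b) =
  \sum_(i < K) (ip D (smode D (star D a) (d%:Z + i%:Z) b) (smode D (star D a) (d%:Z + i%:Z) b)
               + ip D (Y D a i%:Z b) (Y D a i%:Z b)).
Proof.
move=> Ha; have HV' := HV; hv HV'.
rewrite (smode_homog HV _ _ Ha) addNr sub0r.
set x := star D a.
rewrite (smodeX HV _ _ Ha).
have [K0 HK] := unif (P := fun j K => Y D (Y D a (-1) (Defs.proj D j x)) (d%:Z + j%:Z - 1) b =
   \sum_(i < K) (Y D a (-1 - i%:Z) (Y D (Defs.proj D j x) (d%:Z + j%:Z - 1 + i%:Z) b)
       + Y D (Defs.proj D j x) (d%:Z + j%:Z - 1 - 1 - i%:Z) (Y D a i%:Z b)))
   (n := dbound D x) (fun j _ => borchN1 HV a (Defs.proj D j x) (d%:Z + j%:Z - 1) b).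
exists K0 => K hK.
rewrite (eq_bigr _ (fun (j : 'I_(dbound D x)) _ => HK K hK j (ltn_ord j))).
rewrite exchange_big (ipsumr HV); apply: eq_bigr => i _.
rewrite big_split /= -!(Ysumr HV) (ipDr HV).
congr (_ + _).
  have Ew : \sum_(j < dbound D x) Y D (Defs.proj D j x) (d%:Z + j%:Z - 1 + i%:Z) b
      = smode D x (d%:Z + i%:Z) b.
    by rewrite /smode; apply: eq_bigr => j _; congr (Y D _ _ _); lia.
  rewrite Ew.
  have -> : Y D a (-1 - i%:Z) (smode D x (d%:Z + i%:Z) b) =
     smode D a (- d%:Z - i%:Z) (smode D x (d%:Z + i%:Z) b).
    by rewrite (smode_homog HV _ _ Ha); congr (Y D _ _ _); lia.
  rewrite inv; congr (ip D _ _); congr (smode D _ _ _); lia.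
have Ew : \sum_(j < dbound D x) Y D (Defs.proj D j x) (d%:Z + j%:Z - 1 - 1 - i%:Z) (Y D a i%:Z b)
    = smode D x (d%:Z - 1 - i%:Z) (Y D a i%:Z b).
  by rewrite /smode; apply: eq_bigr => j _; congr (Y D _ _ _); lia.
rewrite Ew inv /x starinv (smode_homog HV _ _ Ha).
by congr (ip D (Y D _ _ _) _); lia.
Qed.

Lemma vnorm_sq w : real_complex R (vnorm D w ^+ 2) = ip D w w.
Proof.
have HV' := HV; hv HV'.
have := ippos w; rewrite /vnorm; case: (ip D w w) => r s.
rewrite lecE /= => /andP [/eqP -> hr].
by rewrite sqr_sqrtr.
Qed.

Lemma le_sum_term (K : nat) (F G : 'I_K -> R[i]) (i0 : 'I_K) :
  (forall i, 0 <= F i) -> (forall i, 0 <= G i) ->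
  F i0 <= \sum_(i < K) (F i + G i) /\ G i0 <= \sum_(i < K) (F i + G i).
Proof.
move=> hF hG.
have hrest : 0 <= \sum_(i < K | i != i0) (F i + G i) by apply: sumr_ge0 => i _; apply: addr_ge0.
rewrite (bigD1 i0) //=; split.
  by rewrite -addrA lerDl addr_ge0.
by rewrite addrAC lerDr addr_ge0.
Qed.

Lemma part1 d a b (m : int) : homog D d a -> 0 <= m ->
  real_complex R (vnorm D (smode D a m b) ^+ 2) <=
  ip D b (smode D (smode D a (- d%:Z) (star D a)) 0 b).
Proof.
move=> Ha; have HV' := HV; hv HV'.
case: m => [m' _|//].
have [K0 HK] := expansion b Ha.
rewrite vnorm_sq.
case: (posnP (m' + d)) => hmd; last first.
  have hi : (m' + d - 1 < maxn K0 (m' + d))%N.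
    by apply: leq_trans (leq_maxr _ _); rewrite ltn_subrL hmd.
  rewrite (HK (maxn K0 (m' + d)) (leq_maxl _ _)).
  have [_ ] := le_sum_term (Ordinal hi)
     (fun i => ippos (smode D (star D a) (d%:Z + i%:Z) b)) (fun i => ippos (Y D a i%:Z b)).
  rewrite /= (smode_homog HV _ _ Ha).
  have -> : (m' + d - 1)%N%:Z = m'%:Z + d%:Z - 1 by lia.
  by [].
have m0 : m' = 0%N by lia.
have d0 : d = 0%N by lia.
subst m' d.
have [c ac] := cft a Ha.
have s0 : forall y, smode D a 0 y = c *: y.
  move=> y; rewrite (smode_homog HV _ _ Ha) ac -[c *: vac D]addr0 Ylin1 (Y0l HV) addr0 Yvac.
  by [].
rewrite (HK (maxn K0 1) (leq_maxl _ _)).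
have hi : (0 < maxn K0 1)%N by apply: leq_trans (leq_maxr _ _).
have [h _] := le_sum_term (Ordinal hi)
     (fun i => ippos (smode D (star D a) (0%N%:Z + i%:Z) b)) (fun i => ippos (Y D a i%:Z b)).
apply: le_trans h; rewrite /=.
set u := smode D (star D a) _ b.
have hu : forall y, ip D y u = c * ip D y b.
  by move=> y; rewrite /u inv starinv s0 (ipZl HV).
rewrite s0 (ipZl HV) (ipZr HV).
rewrite [ip D u u]hu [ip D u b]herm hu; rewrite le_eqVlt; apply/orP; left; apply/eqP; congr (_ * _); rewrite rmorphM; congr (_ * _); exact: herm.
Qed.

Lemma vnorm_ge0 w : 0 <= vnorm D w.
Proof. exact: sqrtr_ge0. Qed.

Lemma ip_eq0 w : vnorm D w = 0 -> w = 0.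
Proof.
have HV' := HV; hv HV' => h; apply: ipdef; by rewrite -vnorm_sq h expr0n /=.
Qed.

Lemma cs_real x y : complex.Im (ip D x y) = 0 ->
  complex.Re (ip D x y) <= vnorm D x * vnorm D y.
Proof.
have HV' := HV; hv HV' => hIm.
set t := vnorm D x; set s := vnorm D y.
have [t0|tp] := eqVneq t 0.
  by rewrite (ip_eq0 t0) (ip0l HV) t0 mul0r.
have [s0|sp] := eqVneq s 0.
  by rewrite (ip_eq0 s0) (ip0r HV) s0 mulr0.
have hxy : ip D x y = (complex.Re (ip D x y))%:C.
  by case: (ip D x y) hIm => r i0 /= ->.
set w := complex.Re (ip D x y).
have hyx : ip D y x = w%:C by rewrite herm hxy conjc_real.
have hxx : ip D x x = (t ^+ 2)%:C by rewrite -vnorm_sq.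
have hyy : ip D y y = (s ^+ 2)%:C by rewrite -vnorm_sq.
have := ippos (s%:C *: x + (- t%:C) *: y).
rewrite !(ipDl HV) !(ipZl HV) !(ipDr HV) !(ipZr HV) hxx hyy hxy hyx.
rewrite lecE /= -/w => /andP [_ H].
rewrite !(mulr0, mul0r, oppr0, subr0, addr0, add0r) in H.
have tp' : 0 < t by rewrite lt_def tp vnorm_ge0.
have sp' : 0 < s by rewrite lt_def sp vnorm_ge0.
have stp : 0 < t * s by apply: mulr_gt0.
nra.
Qed.
End S2.

Lemma sup_sq (R : realType) (T : Type) (S : set T) (f g : T -> R) (x0 : T) :
  S x0 -> (forall b, S b -> 0 <= f b) -> (forall b, S b -> f b ^+ 2 <= g b) ->
  (ereal_sup [set (f b)%:E | b in S] * ereal_sup [set (f b)%:E | b in S]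
     <= ereal_sup [set (g b)%:E | b in S])%E.
Proof.
move=> Sx0 f0 fg.
have g0 : forall b, S b -> 0 <= g b by move=> b Sb; apply: le_trans (fg b Sb); apply: sqr_ge0.
have F0 : (0 <= ereal_sup [set (f b)%:E | b in S])%E.
  apply: le_trans (_ : ((f x0)%:E <= _)%E); first by rewrite lee_fin f0.
  by apply: ereal_sup_ubound; exists x0.
have G0 : (0 <= ereal_sup [set (g b)%:E | b in S])%E.
  apply: le_trans (_ : ((g x0)%:E <= _)%E); first by rewrite lee_fin g0.
  by apply: ereal_sup_ubound; exists x0.
have Gub : forall b, S b -> ((g b)%:E <= ereal_sup [set (g b)%:E | b in S])%E.
  by move=> b Sb; apply: ereal_sup_ubound; exists b.
move: G0 Gub; case: (ereal_sup [set (g b)%:E | b in S]) => [r| |] G0 Gub; last first.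
- by [].
- by rewrite leey.
have r0 : 0 <= r by [].
have hb : forall b, S b -> f b <= Num.sqrt r.
  move=> b Sb; rewrite -(ger0_norm (f0 b Sb)) -sqrtr_sqr.
  apply: ler_wsqrtr; apply: le_trans (fg b Sb) _; by have := Gub b Sb; rewrite lee_fin.
have FU : (ereal_sup [set (f b)%:E | b in S] <= (Num.sqrt r)%:E)%E.
  by apply: ge_ereal_sup => y [b Sb <-]; rewrite lee_fin; apply: hb.
move: F0 FU; case: (ereal_sup [set (f b)%:E | b in S]) => [u| |] F0 FU; last first.
- by [].
- by [].
rewrite -EFinM lee_fin.
have hq : Num.sqrt r * Num.sqrt r = r by rewrite -expr2 sqr_sqrtr.
have u0 : 0 <= u by [].
have uq : u <= Num.sqrt r by [].
nra.
Qed.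

Theorem mainTheorem1 (R : realType) (V : lmodType R[i]) (D : VOAData V)
  (HV : is_simple_unitary_VOA D) (d : nat) (a : V) (Ha : homog D d a) :
  (forall (b : V) (m : int), 0 <= m ->
     (real_complex R ((vnorm D (smode D a m b)) ^+ 2))
       <= ip D b (smode D (smode D a (- d%:Z) (star D a)) 0 b)) /\
  (forall (m : int) (n : int), 0 <= m ->
     (opnorm D (smode D a m) n * opnorm D (smode D a m) n
       <= opnorm D (smode D (smode D a (- d%:Z) (star D a)) 0) n)%E) /\
  (forall n : int,
     (opnorm D (smode D a 0) n * opnorm D (smode D a 0) n
       <= opnorm D (smode D (smode D a (- d%:Z) (star D a)) 0) n)%E).
Proof.
have P1 : forall (b : V) (m : int), 0 <= m ->
     (real_complex R ((vnorm D (smode D a m b)) ^+ 2))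
       <= ip D b (smode D (smode D a (- d%:Z) (star D a)) 0 b).
  by move=> b m hm; apply: part1.
have P2 : forall (m : int) (n : int), 0 <= m ->
     (opnorm D (smode D a m) n * opnorm D (smode D a m) n
       <= opnorm D (smode D (smode D a (- d%:Z) (star D a)) 0) n)%E.
  move=> m n hm; rewrite /opnorm.
  apply: (sup_sq (f := fun b => vnorm D (smode D a m b))
                 (g := fun b => vnorm D (smode D (smode D a (- d%:Z) (star D a)) 0 b)) (x0 := 0)).
  - split; first by move=> k _; apply: P0.
    by rewrite /vnorm (ip0l HV) /= sqrtr0.
  - by move=> b _; apply: vnorm_ge0.
  - move=> b [_ hb].
    have := P1 b m hm; rewrite lecE => /andP [/eqP him hre].
    have him' : complex.Im (ip D b (smode D (smode D a (- d%:Z) (star D a)) 0 b)) = 0 by rewrite him.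
    have := cs_real HV him'.
    have := @vnorm_ge0 _ _ D (smode D (smode D a (- d%:Z) (star D a)) 0 b).
    move: hre; rewrite /=.
    set x := complex.Re _; set y := vnorm D _; set z := vnorm D b; set w := vnorm D _.
    move=> hre y0 hcs.
    have z0 : 0 <= z by apply: (@vnorm_ge0 _ _ D).
    rewrite -/z in hb; nra.
split; first exact: P1.
split; first exact: P2.
by move=> n; apply: P2.
Qed.
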